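(* Let $n\ge1$, $X=\{1,\dots,n\}$, $\mathcal{A}$ the algebra of all functions $X\to\mathbb{R}$ with pointwise operations, $\sigma:X\to X$ a bijection and $\tilde{\sigma}(f)=f\circ\sigma^{-1}$. The centralizer of $\mathcal{A}$ in the skew-Laurent ring $\mathcal{A}[x,x^{-1};\tilde{\sigma}]$ is $$C(\mathcal{A})=\Big\{\sum_{n\in\mathbb{Z}} f_nx^n : f_n\in\mathcal{A},\ f_n=0\text{ for all but finitely many } n,\ f_n=0\text{ on } Sep^n(X)\text{ for all } n\Big\}.$$
   Context: The skew-Laurent ring $\mathcal{A}[x,x^{-1};\tilde{\sigma}]$ is the ring containing $\mathcal{A}$ as a subring and an invertible element $x$ such that it is a free left $\mathcal{A}$-module with basis $\{x^n:n\in\mathbb{Z}\}$ and $xf=\tilde{\sigma}(f)x$, $x^{-1}f=\tilde{\sigma}^{-1}(f)x^{-1}$ for all $f\in\mathcal{A}$. For an integer $n$, $Sep^n(X)=\{p\in X:\sigma^n(p)\neq p\}$ (so $Sep^0(X)=\emptyset$). *)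

(* Defs.v *)
From HB Require Import structures.
From mathcomp Require Import all_boot all_order all_algebra all_fingroup.
From mathcomp Require Import Rstruct.
Set Implicit Arguments. Unset Strict Implicit. Unset Printing Implicit Defensive.
Import Order.TTheory GRing.Theory Num.Theory.
Local Open Scope ring_scope.

Definition Alg (n : nat) := {ffun 'I_n -> Rdefinitions.R}.
Definition Azero n : Alg n := [ffun _ => 0].
Definition Aadd n (f g : Alg n) : Alg n := [ffun i => f i + g i].
Definition Amul n (f g : Alg n) : Alg n := [ffun i => f i * g i].

Definition permz n (s : {perm 'I_n}) (m : int) : {perm 'I_n} :=
  match m with
  | Posz k => (s ^+ k)%g
  | Negz k => ((s^-1) ^+ k.+1)%g
  end.

Definition sigt n (s : {perm 'I_n}) (m : int) (f : Alg n) : Alg n :=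
  [ffun i => f (permz s (- m) i)].

Definition Sep n (s : {perm 'I_n}) (m : int) : {set 'I_n} :=
  [set p | permz s m p != p].

(* Elements of the skew-Laurent ring A[x,x^{-1}; tilde-sigma]: formal finite
   sums  \sum_t (t.2) x^(t.1)  (left coefficients).  Two formal sums denote the
   same ring element iff they have the same coefficient functions [slcoef]. *)
Definition SL (n : nat) := seq (int * Alg n).

Definition slcoef n (p : SL n) (k : int) : Alg n :=
  foldr (fun t acc => if t.1 == k then Aadd t.2 acc else acc) (Azero n) p.

Definition slconst n (f : Alg n) : SL n := [:: ((0 : int), f)].

(* multiplication, extended bilinearly from
   (f x^m)(g x^k) = f tilde-sigma^m(g) x^(m+k) *)
Definition slmul n (s : {perm 'I_n}) (p q : SL n) : SL n :=
  [seq (t.1 + u.1, Amul t.2 (sigt s t.1 u.2)) | t <- p, u <- q].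

Definition sleq n (p q : SL n) : Prop := forall k, slcoef p k = slcoef q k.

Definition in_centralizer n (s : {perm 'I_n}) (p : SL n) : Prop :=
  forall f : Alg n, sleq (slmul s (slconst f) p) (slmul s p (slconst f)).

(* Main.v *)
Require Import Defs.
From HB Require Import structures.
From mathcomp Require Import all_boot all_order all_algebra all_fingroup.
From mathcomp Require Import Rstruct.
Local Open Scope ring_scope.
Import GRing.Theory.

Lemma L1 n (s : {perm 'I_n}) (f : Alg n) (p : SL n) k :
  slcoef (slmul s (slconst f) p) k = [ffun i => f i * slcoef p k i].
Proof.
rewrite /slmul /slconst /= cats0.
elim: p => [|a l IH] /=.
  by apply/ffunP => i; rewrite /Azero !ffunE mulr0.
rewrite add0r; case: (a.1 == k); rewrite IH //.
apply/ffunP => i; rewrite /Aadd /Amul /sigt !ffunE /= mulrDr.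
by rewrite expg0 perm1.
Qed.

Lemma L2 n (s : {perm 'I_n}) (f : Alg n) (p : SL n) k :
  slcoef (slmul s p (slconst f)) k = [ffun i => slcoef p k i * f (permz s (-k) i)].
Proof.
rewrite /slmul /slconst.
elim: p => [|a l IH] /=.
  by apply/ffunP => i; rewrite /Azero !ffunE mul0r.
move: IH => /= IH; rewrite addr0; case: eqP => [e|_]; rewrite IH //.
by apply/ffunP => i; rewrite /Aadd /Amul /sigt !ffunE /= mulrDl e.
Qed.

Lemma L3 n (s : {perm 'I_n}) k : permz s (- k) = ((permz s k)^-1)%g.
Proof.
case: k => [[|m]|m] /=.
- by rewrite invg1.
- by rewrite expgVn.
- by rewrite expgVn invgK.
Qed.

Theorem theorem12 (n : nat) (hn : (0 < n)%N) (s : {perm 'I_n}) (p : SL n) :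
  in_centralizer s p <->
  (forall (k : int) (i : 'I_n), i \in Sep s k -> slcoef p k i = 0%R).
Proof.
split.
- move=> H k i; rewrite inE => hi.
  have := H [ffun j => ((j == i)%:R : Rdefinitions.R)] k.
  rewrite L1 L2 => /ffunP /(_ i); rewrite !ffunE eqxx mul1r => ->.
  case: eqP => [e|_]; last by rewrite mulr0.
  exfalso; move/negP: hi; apply; apply/eqP.
  move: e; rewrite L3 => e; have := congr1 (permz s k) e; rewrite permKV => h; by rewrite -h.
- move=> H f k; rewrite L1 L2; apply/ffunP => i; rewrite !ffunE.
  case hi: (i \in Sep s k); first by rewrite H // mulr0 mul0r.
  move: hi; rewrite inE => /negbFE/eqP e.
  have -> : permz s (- k) i = i.
    by rewrite L3; apply: (@perm_inj _ (permz s k)); rewrite permKV e.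
  by rewrite mulrC.
Qed.
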